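(* Let $k>0$ and consider the system of ODEs, for $r>0$, $\theta$, $z$, $p_R$, $p_S$ real, \[ \dot r = p_R,\quad \dot\theta = \frac{p_S}{r^2},\quad \dot z = \frac{p_S}{2},\quad \dot p_R = \frac{p_S^2}{r^3} - \frac{2kr^3}{(r^4+16z^2)^{3/2}},\quad \dot p_S = -\frac{8kr^2 z}{(r^4+16z^2)^{3/2}}. \] This system does not admit any (non-constant) first integral that is linear in the momenta, i.e. of the form $F = f(r,\theta,z)\,p_R + g(r,\theta,z)\,p_S + h(r,\theta,z)$ with smooth coefficients.
   Context: A first integral is a function of $(r,\theta,z,p_R,p_S)$ constant along all solutions. The system describes nonholonomic motion on the Heisenberg group in the potential $-k/\sqrt{r^4+16z^2}$ in cylindrical coordinates. *)

(* Defs.v *)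
From Stdlib Require Import Reals.
From Coquelicot Require Import Coquelicot.
Open Scope R_scope.

Definition cont3_at (f : R -> R -> R -> R) (r th z : R) : Prop :=
  forall eps : R, 0 < eps -> exists delta : R, 0 < delta /\
    forall r' th' z' : R, 0 < r' ->
      Rabs (r' - r) < delta -> Rabs (th' - th) < delta -> Rabs (z' - z) < delta ->
      Rabs (f r' th' z' - f r th z) < eps.

Fixpoint Ck (n : nat) (f : R -> R -> R -> R) : Prop :=
  match n with
  | O => forall r th z, 0 < r -> cont3_at f r th z
  | S m =>
      (forall r th z, 0 < r -> cont3_at f r th z) /\
      (forall r th z, 0 < r ->
         ex_derive (fun x => f x th z) r /\
         ex_derive (fun x => f r x z) th /\
         ex_derive (fun x => f r th x) z) /\
      Ck m (fun r th z => Derive (fun x => f x th z) r) /\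
      Ck m (fun r th z => Derive (fun x => f r x z) th) /\
      Ck m (fun r th z => Derive (fun x => f r th x) z)
  end.

Definition smooth3 (f : R -> R -> R -> R) : Prop := forall n, Ck n f.

Definition Dpow (r z : R) : R := (r ^ 4 + 16 * z ^ 2) * sqrt (r ^ 4 + 16 * z ^ 2).

Definition is_solution (k a b : R) (r th z pR pS : R -> R) : Prop :=
  a < b /\
  forall t, a < t < b ->
    0 < r t /\
    is_derive r t (pR t) /\
    is_derive th t (pS t / (r t) ^ 2) /\
    is_derive z t (pS t / 2) /\
    is_derive pR t ((pS t) ^ 2 / (r t) ^ 3 - 2 * k * (r t) ^ 3 / Dpow (r t) (z t)) /\
    is_derive pS t (- (8 * k * (r t) ^ 2 * z t) / Dpow (r t) (z t)).

Definition first_integral (k : R) (F : R -> R -> R -> R -> R -> R) : Prop :=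
  forall a b (r th z pR pS : R -> R), is_solution k a b r th z pR pS ->
    forall t1 t2, a < t1 < b -> a < t2 < b ->
      F (r t1) (th t1) (z t1) (pR t1) (pS t1) = F (r t2) (th t2) (z t2) (pR t2) (pS t2).

(* Main.v *)
Require Import Defs.
From Stdlib Require Import Reals Lra Lia.
From Coquelicot Require Import Coquelicot.
Open Scope R_scope.

Lemma ballR (x y e : R) : ball x e y <-> Rabs (y - x) < e.
Proof. unfold ball; simpl; unfold AbsRing_ball, abs, minus, plus, opp; simpl. tauto. Qed.

Lemma cont_eps (f : R -> R) t : continuous f t ->
  forall e, 0 < e -> exists d, 0 < d /\ forall s, Rabs (s - t) < d -> Rabs (f s - f t) < e.
Proof.
  intros H e He.
  apply continuity_pt_filterlim in H. rewrite continuity_pt_locally in H.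
  destruct (H (mkposreal e He)) as [d Hd].
  exists d. split. apply cond_pos. intros s Hs. apply Hd. apply ballR. exact Hs.
Qed.

Lemma eps_cont (f : R -> R) t :
  (forall e, 0 < e -> exists d, 0 < d /\ forall s, Rabs (s - t) < d -> Rabs (f s - f t) < e) ->
  continuous f t.
Proof.
  intros H. apply continuity_pt_filterlim. rewrite continuity_pt_locally.
  intros eps. destruct (H eps (cond_pos eps)) as [d [Hd H']].
  exists (mkposreal d Hd). intros y Hy. apply H'. apply ballR. exact Hy.
Qed.

Lemma derive_cont (f : R -> R) t l : is_derive f t l -> continuous f t.
Proof. intros H. apply (ex_derive_continuous (K:=R_AbsRing) (V:=R_NormedModule)). exists l. exact H. Qed.

Lemma multi_cont (phi : R -> nat -> R) t : forall N,
  (forall j, (j < N)%nat -> continuous (fun s => phi s j) t) ->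
  forall e, 0 < e -> exists d, 0 < d /\ forall s, Rabs (s - t) < d ->
     forall j, (j < N)%nat -> Rabs (phi s j - phi t j) < e.
Proof.
  induction N as [|N IH]; intros Hc e He.
  - exists 1. split. lra. intros s _ j Hj. lia.
  - destruct (IH (fun j Hj => Hc j ltac:(lia)) e He) as [d1 [Hd1 H1]].
    destruct (cont_eps _ _ (Hc N ltac:(lia)) e He) as [d2 [Hd2 H2]].
    exists (Rmin d1 d2). split. apply Rmin_pos; lra.
    intros s Hs j Hj.
    destruct (Nat.eq_dec j N) as [->|Hne].
    + apply H2. pose proof (Rmin_r d1 d2). lra.
    + apply H1. pose proof (Rmin_l d1 d2). lra. lia.
Qed.

Lemma RInt_bound (f : R -> R) a b B : ex_RInt f a b ->
  (forall s, Rmin a b <= s <= Rmax a b -> Rabs (f s) <= B) ->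
  Rabs (RInt f a b) <= B * Rabs (b - a).
Proof.
  intros Hex Hb.
  destruct (Rle_dec a b) as [Hab|Hab].
  - rewrite (Rabs_right (b - a)) by lra.
    rewrite Rmult_comm. apply abs_RInt_le_const; auto.
    intros t Ht. apply Hb. rewrite Rmin_left, Rmax_right; lra.
  - rewrite <- (opp_RInt_swap f b a) by (apply ex_RInt_swap; exact Hex).
    rewrite (Rabs_left (b - a)) by lra.
    unfold opp; simpl. rewrite Rabs_Ropp.
    replace (- (b - a)) with (a - b) by ring.
    rewrite Rmult_comm. apply abs_RInt_le_const. lra.
    apply ex_RInt_swap. exact Hex.
    intros t Ht. apply Hb. rewrite Rmin_right, Rmax_left; lra.
Qed.

Lemma geom_le0 a C q : 0 <= q < 1 -> (forall n, a <= C * q ^ n) -> a <= 0.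
Proof.
  intros Hq H.
  assert (Hl : is_lim_seq (fun n => C * q ^ n) (C * 0)).
  { apply (is_lim_seq_scal_l _ C 0). apply is_lim_seq_geom. rewrite Rabs_right; lra. }
  pose proof (is_lim_seq_le (fun _ => a) (fun n => C * q ^ n) a (C*0) H (is_lim_seq_const a) Hl) as Hle.
  simpl in Hle. lra.
Qed.

Definition PH (G : (nat->R)->(nat->R)) (M L : R) :=
  0 < M /\ 0 < L /\ (forall v i, (i<5)%nat -> Rabs (G v i) <= M) /\
  (forall v w e, (forall j, (j<5)%nat -> Rabs (v j - w j) <= e) ->
     forall i, (i<5)%nat -> Rabs (G v i - G w i) <= L*e).

Fixpoint PY (G : (nat->R)->(nat->R)) (y0 : nat -> R) (n : nat) (t : R) : nat -> R :=
  match n with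
  | O => y0
  | S m => fun i => y0 i + RInt (fun s => G (PY G y0 m s) i) 0 t
  end.

Lemma G_cont G M L (H : PH G M L) (phi : R -> nat -> R) t :
  (forall j, (j<5)%nat -> continuous (fun s => phi s j) t) ->
  forall i, (i<5)%nat -> continuous (fun s => G (phi s) i) t.
Proof.
  destruct H as [HM0 [HL0 [HM HL]]].
  intros Hc i Hi. apply eps_cont. intros e He.
  destruct (multi_cont phi t 5 Hc (e/(2*L))) as [d [Hd Hd']].
  { apply Rdiv_lt_0_compat; lra. }
  exists d. split. exact Hd. intros s Hs.
  eapply Rle_lt_trans. apply (HL _ _ (e/(2*L))). intros j Hj. left. apply Hd'; auto. exact Hi.
  replace (L * (e / (2 * L))) with (e/2) by (field; lra). lra.
Qed.

Lemma RInt_deriv (f : R -> R) c t : (forall s, continuous f s) ->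
  is_derive (fun s => c + RInt f 0 s) t (f t).
Proof.
  intros Hc.
  assert (Hd : is_derive (fun s => RInt f 0 s) t (f t)).
  { apply is_derive_RInt with (a := 0). exists (mkposreal 1 Rlt_0_1). intros y _.
    apply RInt_correct. apply ex_RInt_continuous. intros z _. apply Hc. apply Hc. }
  pose proof (is_derive_plus (fun _ => c) (fun s => RInt f 0 s) t 0 (f t) (is_derive_const c t) Hd) as H.
  unfold plus, zero in H; simpl in H. rewrite Rplus_0_l in H. exact H.
Qed.

Lemma PY_cont G y0 M L (H : PH G M L) : forall n i, (i<5)%nat -> forall t,
  continuous (fun s => PY G y0 n s i) t.
Proof.
  induction n as [|n IH]; intros i Hi t; simpl.
  - apply continuous_const.
  - apply (derive_cont _ _ (G (PY G y0 n t) i)). apply RInt_deriv.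
    intros s. apply (G_cont G M L H (PY G y0 n)); auto.
Qed.

Lemma PY_exRInt G y0 M L (H : PH G M L) n i a b : (i<5)%nat ->
  ex_RInt (fun s => G (PY G y0 n s) i) a b.
Proof.
  intros Hi. apply (ex_RInt_continuous (V:=R_CompleteNormedModule)). intros z _.
  apply (G_cont G M L H (PY G y0 n)); auto. intros j Hj. apply (PY_cont G y0 M L H); auto.
Qed.

Lemma PY_0 G y0 n i : PY G y0 n 0 i = y0 i.
Proof. destruct n; simpl. reflexivity. rewrite RInt_point. unfold zero; simpl. ring. Qed.

Lemma PY_lip G y0 M L (H : PH G M L) n i t t' : (i<5)%nat ->
  Rabs (PY G y0 n t i - PY G y0 n t' i) <= M * Rabs (t - t').
Proof.
  intros Hi. pose proof H as [HM0 [HL0 [HM HL]]].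
  destruct n as [|n]; simpl.
  - rewrite Rminus_diag, Rabs_R0. apply Rmult_le_pos. lra. apply Rabs_pos.
  - set (f := fun s => G (PY G y0 n s) i).
    assert (Hc : RInt f 0 t' + RInt f t' t = RInt f 0 t).
    { rewrite <- (RInt_Chasles f 0 t' t) by (apply (PY_exRInt G y0 M L H); auto). reflexivity. }
    rewrite <- Hc.
    assert (E : forall a b c : R, a + (b + c) - (a + b) = c) by (intros; ring). rewrite E.
    apply RInt_bound. apply (PY_exRInt G y0 M L H); auto.
    intros s _. apply HM; auto.
Qed.

Lemma PY_step G y0 M L (H : PH G M L) d : 0 < d -> forall n t, Rabs t <= d ->
  forall i, (i<5)%nat -> Rabs (PY G y0 (S n) t i - PY G y0 n t i) <= M * d * (L*d) ^ n.
Proof.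
  intros Hd. pose proof H as [HM0 [HL0 [HM HL]]].
  induction n as [|n IH]; intros t Ht i Hi.
  - simpl. assert (E : forall a b : R, a + b - a = b) by (intros; ring). rewrite E.
    eapply Rle_trans. apply RInt_bound. apply ex_RInt_const. intros s _. apply HM; auto.
    rewrite Rminus_0_r. rewrite Rmult_1_r. apply Rmult_le_compat_l; lra.
  - change (PY G y0 (S (S n)) t i) with (y0 i + RInt (fun s => G (PY G y0 (S n) s) i) 0 t).
    change (PY G y0 (S n) t i) with (y0 i + RInt (fun s => G (PY G y0 n s) i) 0 t).
    assert (E : forall a b c : R, a + b - (a + c) = minus b c) by (intros; unfold minus, plus, opp; simpl; ring).
    rewrite E.
    rewrite <- (RInt_minus (V:=R_CompleteNormedModule)) by (apply (PY_exRInt G y0 M L H); auto).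
    eapply Rle_trans. apply (RInt_bound _ _ _ (L * (M * d * (L*d)^n))).
    apply ex_RInt_minus; apply (PY_exRInt G y0 M L H); auto.
    intros s Hs. unfold minus, plus, opp; simpl. apply HL; auto. intros j Hj. apply IH; auto.
    apply Rabs_le. destruct (Rle_dec 0 t).
    rewrite Rmin_left, Rmax_right in Hs by lra. apply Rabs_le_between in Ht. lra.
    rewrite Rmin_right, Rmax_left in Hs by lra. apply Rabs_le_between in Ht. lra.
    rewrite Rminus_0_r. simpl.
    assert (0 <= (L*d)^n) by (apply pow_le; apply Rmult_le_pos; lra).
    replace (M * d * (L * d * (L * d) ^ n)) with (L * (M * d * (L * d) ^ n) * d) by ring.
    apply Rmult_le_compat_l. apply Rmult_le_pos. lra. apply Rmult_le_pos. nra. auto. auto.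
Qed.

Lemma PY_cauchy G y0 M L (H : PH G M L) d : 0 < d -> L * d <= /2 -> forall m n t, Rabs t <= d ->
  forall i, (i<5)%nat -> Rabs (PY G y0 (n + m) t i - PY G y0 n t i) <= 2 * M * d * ((L*d)^n - (L*d)^(n+m)).
Proof.
  intros Hd Hq. pose proof H as [HM0 [HL0 [HM HL]]].
  assert (Hq0 : 0 <= L * d) by nra.
  induction m as [|m IH]; intros n t Ht i Hi.
  - rewrite Nat.add_0_r. rewrite Rminus_diag, Rabs_R0, Rminus_diag. lra.
  - replace (n + S m)%nat with (S (n + m)) by lia.
    pose proof (PY_step G y0 M L H d Hd (n+m) t Ht i Hi) as H1.
    pose proof (IH n t Ht i Hi) as H2.
    replace (PY G y0 (S (n + m)) t i - PY G y0 n t i) with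
      ((PY G y0 (S (n + m)) t i - PY G y0 (n+m) t i) + (PY G y0 (n + m) t i - PY G y0 n t i)) by ring.
    eapply Rle_trans. apply Rabs_triang.
    assert (0 <= (L*d)^(n+m)) by (apply pow_le; auto).
    assert (HX : 0 <= M * d * (L*d)^(n+m)) by (apply Rmult_le_pos; [nra|auto]).
    replace ((L*d)^(S(n+m))) with (L*d*(L*d)^(n+m)) by (simpl; ring). set (X := (L*d)^(n+m)) in *. set (Y := (L*d)^n) in *.
    assert (M * d * X * (1 - 2 * L * d) >= 0). { apply Rle_ge. apply Rmult_le_pos. exact HX. lra. }
    lra.
Qed.

Lemma lim_abs_le (u v : nat -> R) (l l' B : R) : is_lim_seq u l -> is_lim_seq v l' ->
  (forall n, Rabs (u n - v n) <= B) -> Rabs (l - l') <= B.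
Proof.
  intros Hu Hv Hb.
  assert (Hl : is_lim_seq (fun n => Rabs (u n - v n)) (Rabs (l - l'))).
  { apply (is_lim_seq_abs _ (l - l')). apply (is_lim_seq_minus _ _ l l'); auto.
    unfold is_Rbar_minus, is_Rbar_plus; simpl. reflexivity. }
  pose proof (is_lim_seq_le _ (fun _ => B) _ B Hb Hl (is_lim_seq_const B)). simpl in H. exact H.
Qed.

Lemma abs_sub_le a b : Rabs (a - b) <= Rabs a + Rabs b.
Proof. unfold Rminus. eapply Rle_trans. apply Rabs_triang. rewrite Rabs_Ropp. lra. Qed.

Definition Yinf G y0 (t : R) (i : nat) : R := real (Lim_seq (fun n => PY G y0 n t i)).

Lemma Yinf_lim G y0 M L (H : PH G M L) d : 0 < d -> L * d <= /2 -> forall t, Rabs t <= d ->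
  forall i, (i<5)%nat -> is_lim_seq (fun n => PY G y0 n t i) (Yinf G y0 t i).
Proof.
  intros Hd Hq t Ht i Hi. pose proof H as [HM0 [HL0 [HM HL]]].
  assert (Hq0 : 0 <= L * d) by nra.
  assert (Hex : ex_finite_lim_seq (fun n => PY G y0 n t i)).
  { apply ex_lim_seq_cauchy_corr. intros eps.
    destruct (pow_lt_1_zero (L*d) ltac:(rewrite Rabs_right; lra) (eps / (4*M*d+1))) as [N HN].
    { apply Rdiv_lt_0_compat. apply cond_pos. nra. }
    exists N. intros n m Hn Hm.
    pose proof (PY_cauchy G y0 M L H d Hd Hq (n - N) N t Ht i Hi) as H1.
    pose proof (PY_cauchy G y0 M L H d Hd Hq (m - N) N t Ht i Hi) as H2.
    replace (N + (n - N))%nat with n in H1 by lia.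
    replace (N + (m - N))%nat with m in H2 by lia.
    pose proof (HN N (le_n N)) as H3. rewrite Rabs_right in H3 by (apply Rle_ge, pow_le; auto).
    assert (0 <= (L*d)^n) by (apply pow_le; auto).
    assert (0 <= (L*d)^m) by (apply pow_le; auto).
    assert (Hp : (L*d)^N * (4*M*d+1) < eps).
    { pose proof (cond_pos eps). apply Rmult_lt_compat_r with (r := 4*M*d+1) in H3. 2: nra.
      replace (eps / (4 * M * d + 1) * (4 * M * d + 1)) with (pos eps) in H3 by (field; nra). exact H3. }
    replace (PY G y0 n t i - PY G y0 m t i) with ((PY G y0 n t i - PY G y0 N t i) - (PY G y0 m t i - PY G y0 N t i)) by ring.
    eapply Rle_lt_trans. apply abs_sub_le.
    assert (0 <= (L*d)^N) by (apply pow_le; auto).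
    assert (0 <= M * d * (L*d)^n) by (apply Rmult_le_pos; [nra|auto]).
    assert (0 <= M * d * (L*d)^m) by (apply Rmult_le_pos; [nra|auto]).
    lra. }
  destruct Hex as [l Hl].
  unfold Yinf. rewrite (is_lim_seq_unique _ _ Hl). simpl. exact Hl.
Qed.

Lemma Yinf_close G y0 M L (H : PH G M L) d : 0 < d -> L * d <= /2 -> forall n t, Rabs t <= d ->
  forall i, (i<5)%nat -> Rabs (Yinf G y0 t i - PY G y0 n t i) <= 2 * M * d * (L*d)^n.
Proof.
  intros Hd Hq n t Ht i Hi. pose proof H as [HM0 [HL0 [HM HL]]].
  assert (Hq0 : 0 <= L * d) by nra.
  pose proof (Yinf_lim G y0 M L H d Hd Hq t Ht i Hi) as Hl.
  apply (is_lim_seq_incr_n _ n) in Hl.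
  apply (lim_abs_le _ _ _ _ _ Hl (is_lim_seq_const _)).
  intros m. rewrite Nat.add_comm. eapply Rle_trans. apply (PY_cauchy G y0 M L H d Hd Hq m n t Ht i Hi).
  assert (0 <= (L*d)^(n+m)) by (apply pow_le; auto).
  assert (0 <= M * d * (L*d)^(n+m)) by (apply Rmult_le_pos; [nra|auto]). lra.
Qed.

Lemma Yinf_y0 G y0 M L (H : PH G M L) d : 0 < d -> L * d <= /2 -> forall t, Rabs t <= d ->
  forall i, (i<5)%nat -> Rabs (Yinf G y0 t i - y0 i) <= M * Rabs t.
Proof.
  intros Hd Hq t Ht i Hi.
  apply (lim_abs_le _ _ _ _ _ (Yinf_lim G y0 M L H d Hd Hq t Ht i Hi) (is_lim_seq_const _)).
  intros n. rewrite <- (PY_0 G y0 n i). pose proof (PY_lip G y0 M L H n i t 0 Hi) as X.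
  rewrite Rminus_0_r in X. exact X.
Qed.

Lemma Yinf_lip G y0 M L (H : PH G M L) d : 0 < d -> L * d <= /2 -> forall t t', Rabs t <= d -> Rabs t' <= d ->
  forall i, (i<5)%nat -> Rabs (Yinf G y0 t i - Yinf G y0 t' i) <= M * Rabs (t - t').
Proof.
  intros Hd Hq t t' Ht Ht' i Hi.
  apply (lim_abs_le _ _ _ _ _ (Yinf_lim G y0 M L H d Hd Hq t Ht i Hi) (Yinf_lim G y0 M L H d Hd Hq t' Ht' i Hi)).
  intros n. apply (PY_lip G y0 M L H n i t t' Hi).
Qed.

Lemma Yinf_cont G y0 M L (H : PH G M L) d : 0 < d -> L * d <= /2 -> forall t, Rabs t < d ->
  forall i, (i<5)%nat -> continuous (fun s => Yinf G y0 s i) t.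
Proof.
  intros Hd Hq t Ht i Hi. pose proof H as [HM0 [HL0 [HM HL]]].
  apply eps_cont. intros e He.
  exists (Rmin (d - Rabs t) (e / (2*M))). split.
  apply Rmin_pos. lra. apply Rdiv_lt_0_compat; lra.
  intros s Hs. pose proof (Rmin_l (d - Rabs t) (e / (2*M))). pose proof (Rmin_r (d - Rabs t) (e / (2*M))).
  assert (Hs' : Rabs s <= d).
  { pose proof (Rabs_triang_inv s t). lra. }
  eapply Rle_lt_trans. apply (Yinf_lip G y0 M L H d Hd Hq s t Hs' ltac:(lra) i Hi).
  apply Rle_lt_trans with (M * (e / (2*M))). apply Rmult_le_compat_l; lra.
  replace (M * (e / (2*M))) with (e/2) by (field; lra). lra.
Qed.

Lemma Ginf_cont G y0 M L (H : PH G M L) d : 0 < d -> L * d <= /2 -> forall t, Rabs t < d ->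
  forall i, (i<5)%nat -> continuous (fun s => G (Yinf G y0 s) i) t.
Proof.
  intros Hd Hq t Ht i Hi. apply (G_cont G M L H (Yinf G y0) t); auto.
  intros j Hj. apply (Yinf_cont G y0 M L H d); auto.
Qed.

Lemma Ginf_exRInt G y0 M L (H : PH G M L) d : 0 < d -> L * d <= /2 -> forall t, Rabs t < d ->
  forall i, (i<5)%nat -> ex_RInt (fun s => G (Yinf G y0 s) i) 0 t.
Proof.
  intros Hd Hq t Ht i Hi. apply (ex_RInt_continuous (V:=R_CompleteNormedModule)). intros z Hz.
  apply (Ginf_cont G y0 M L H d); auto.
  apply Rabs_lt_between in Ht. apply Rabs_lt_between.
  destruct (Rle_dec 0 t).
  rewrite Rmin_left, Rmax_right in Hz by lra. lra.
  rewrite Rmin_right, Rmax_left in Hz by lra. lra.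
Qed.

Lemma Yinf_int G y0 M L (H : PH G M L) d : 0 < d -> L * d <= /2 -> forall t, Rabs t < d ->
  forall i, (i<5)%nat -> Yinf G y0 t i = y0 i + RInt (fun s => G (Yinf G y0 s) i) 0 t.
Proof.
  intros Hd Hq t Ht i Hi. pose proof H as [HM0 [HL0 [HM HL]]].
  assert (Hq0 : 0 <= L * d) by nra.
  set (X := y0 i + RInt (fun s => G (Yinf G y0 s) i) 0 t).
  assert (Hb : forall n, Rabs (Yinf G y0 t i - X) <= (2*M*d*(L*d) + L * (2*M*d) * d) * (L*d)^n).
  { intros n.
    pose proof (Yinf_close G y0 M L H d Hd Hq (S n) t ltac:(lra) i Hi) as H1.
    assert (H2 : Rabs (PY G y0 (S n) t i - X) <= L * (2*M*d*(L*d)^n) * d).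
    { unfold X. change (PY G y0 (S n) t i) with (y0 i + RInt (fun s => G (PY G y0 n s) i) 0 t).
      assert (E : forall a b c : R, a + b - (a + c) = minus b c) by (intros; unfold minus, plus, opp; simpl; ring).
      rewrite E.
      rewrite <- (RInt_minus (V:=R_CompleteNormedModule)).
      2: apply (PY_exRInt G y0 M L H); auto.
      2: apply (Ginf_exRInt G y0 M L H d); auto.
      eapply Rle_trans. apply (RInt_bound _ _ _ (L * (2*M*d*(L*d)^n))).
      apply ex_RInt_minus. apply (PY_exRInt G y0 M L H); auto. apply (Ginf_exRInt G y0 M L H d); auto.
      intros s Hs. unfold minus, plus, opp; simpl. apply HL; auto. intros j Hj.
      rewrite <- Rabs_Ropp. replace (- (PY G y0 n s j - Yinf G y0 s j)) with (Yinf G y0 s j - PY G y0 n s j) by ring.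
      apply (Yinf_close G y0 M L H d); auto.
      apply Rabs_le. apply Rabs_lt_between in Ht. destruct (Rle_dec 0 t).
      rewrite Rmin_left, Rmax_right in Hs by lra. lra.
      rewrite Rmin_right, Rmax_left in Hs by lra. lra.
      rewrite Rminus_0_r. apply Rmult_le_compat_l. 
      apply Rmult_le_pos. lra. apply Rmult_le_pos. nra. apply pow_le; auto. lra. }
    replace (Yinf G y0 t i - X) with ((Yinf G y0 t i - PY G y0 (S n) t i) + (PY G y0 (S n) t i - X)) by ring.
    eapply Rle_trans. apply Rabs_triang. replace ((L*d)^(S n)) with (L*d*(L*d)^n) in H1 by (simpl; ring). lra. }
  assert (Hz : Rabs (Yinf G y0 t i - X) <= 0) by (apply (geom_le0 _ (2 * M * d * (L * d) + L * (2 * M * d) * d) (L*d)); [lra | exact Hb]).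
  pose proof (Rabs_pos (Yinf G y0 t i - X)).
  assert (Hz0 : Rabs (Yinf G y0 t i - X) = 0) by lra.
  apply Rabs_eq_0 in Hz0. lra.
Qed.

Lemma Yinf_deriv G y0 M L (H : PH G M L) d : 0 < d -> L * d <= /2 -> forall t, Rabs t < d ->
  forall i, (i<5)%nat -> is_derive (fun s => Yinf G y0 s i) t (G (Yinf G y0 t) i).
Proof.
  intros Hd Hq t Ht i Hi.
  assert (Hloc : locally t (fun s => Rabs s < d)).
  { assert (Hp : 0 < d - Rabs t) by lra. exists (mkposreal _ Hp). intros y Hy. apply ballR in Hy. simpl in Hy.
    simpl in Hy. apply (proj1 (ballR t y _)) in Hy. pose proof (Rabs_triang_inv y t). lra. }
  apply is_derive_ext_loc with (f := fun s => y0 i + RInt (fun u => G (Yinf G y0 u) i) 0 s).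
  { destruct Hloc as [e He]. exists e. intros y Hy. symmetry. apply (Yinf_int G y0 M L H d); auto. }
  assert (Hd2 : is_derive (fun s => RInt (fun u => G (Yinf G y0 u) i) 0 s) t (G (Yinf G y0 t) i)).
  { apply (is_derive_RInt (fun u => G (Yinf G y0 u) i) (fun s => RInt (fun u => G (Yinf G y0 u) i) 0 s) 0 t).
    destruct Hloc as [e He]. exists e. intros y Hy. apply (RInt_correct (V:=R_CompleteNormedModule)).
    apply (Ginf_exRInt G y0 M L H d); auto.
    apply (Ginf_cont G y0 M L H d); auto. }
  pose proof (is_derive_plus (fun _ => y0 i) _ t 0 _ (is_derive_const (y0 i) t) Hd2) as X.
  unfold plus, zero in X; simpl in X. rewrite Rplus_0_l in X. exact X.
Qed.

Theorem picard G y0 M L : PH G M L -> exists d, 0 < d /\ forall t, Rabs t < d -> forall i, (i<5)%nat ->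
  is_derive (fun s => Yinf G y0 s i) t (G (Yinf G y0 t) i) /\ Rabs (Yinf G y0 t i - y0 i) <= M * Rabs t.
Proof.
  intros H. pose proof H as [HM0 [HL0 [HM HL]]].
  exists (/(2*L)). split. apply Rinv_0_lt_compat. lra.
  assert (Hq : L * /(2*L) <= /2) by (right; field; lra).
  intros t Ht i Hi. split.
  apply (Yinf_deriv G y0 M L H (/(2*L))); auto. apply Rinv_0_lt_compat; lra.
  apply (Yinf_y0 G y0 M L H (/(2*L))); auto. apply Rinv_0_lt_compat; lra. lra.
Qed.

Definition inbox (c : nat -> R) (rho : R) (v : nat -> R) := forall j, (j<5)%nat -> Rabs (v j - c j) <= rho.

Definition LL c rho (phi : (nat -> R) -> R) := exists M L, 0 <= L /\
  (forall v, inbox c rho v -> Rabs (phi v) <= M) /\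
  (forall v w e, inbox c rho v -> inbox c rho w -> (forall j, (j<5)%nat -> Rabs (v j - w j) <= e) ->
     Rabs (phi v - phi w) <= L * e).

Lemma e_nonneg v w e : (forall j, (j<5)%nat -> Rabs (v j - w j) <= e) -> 0 <= e.
Proof. intros H. eapply Rle_trans. apply Rabs_pos. apply (H 0%nat). lia. Qed.

Lemma LL_ext c rho phi psi : (forall v, phi v = psi v) -> LL c rho phi -> LL c rho psi.
Proof.
  intros E [M [L [HL [HM HLip]]]]. exists M, L. split; auto. split.
  intros v Hv. rewrite <- E. auto. intros v w e Hv Hw He. rewrite <- !E. auto.
Qed.

Lemma LL_coord c rho j : (j<5)%nat -> LL c rho (fun v => v j).
Proof.
  intros Hj. exists (Rabs (c j) + rho), 1. split. lra. split.
  - intros v Hv. pose proof (Hv j Hj). replace (v j) with ((v j - c j) + c j) by ring.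
    eapply Rle_trans. apply Rabs_triang. lra.
  - intros v w e _ _ He. rewrite Rmult_1_l. auto.
Qed.

Lemma LL_const c rho a : LL c rho (fun _ => a).
Proof.
  exists (Rabs a), 0. split. lra. split. intros; lra.
  intros v w e _ _ He. rewrite Rminus_diag, Rabs_R0. lra.
Qed.

Lemma LL_plus c rho phi psi : LL c rho phi -> LL c rho psi -> LL c rho (fun v => phi v + psi v).
Proof.
  intros [M1 [L1 [HL1 [HM1 HLip1]]]] [M2 [L2 [HL2 [HM2 HLip2]]]].
  exists (M1 + M2), (L1 + L2). split. lra. split.
  - intros v Hv. eapply Rle_trans. apply Rabs_triang. pose proof (HM1 v Hv). pose proof (HM2 v Hv). lra.
  - intros v w e Hv Hw He.
    replace (phi v + psi v - (phi w + psi w)) with ((phi v - phi w) + (psi v - psi w)) by ring.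
    eapply Rle_trans. apply Rabs_triang. pose proof (HLip1 v w e Hv Hw He). pose proof (HLip2 v w e Hv Hw He). lra.
Qed.

Lemma LL_opp c rho phi : LL c rho phi -> LL c rho (fun v => - phi v).
Proof.
  intros [M1 [L1 [HL1 [HM1 HLip1]]]]. exists M1, L1. split. lra. split.
  - intros v Hv. rewrite Rabs_Ropp. auto.
  - intros v w e Hv Hw He. replace (- phi v - - phi w) with (- (phi v - phi w)) by ring.
    rewrite Rabs_Ropp. auto.
Qed.

Lemma LL_mult c rho phi psi : LL c rho phi -> LL c rho psi -> LL c rho (fun v => phi v * psi v).
Proof.
  intros [M1 [L1 [HL1 [HM1 HLip1]]]] [M2 [L2 [HL2 [HM2 HLip2]]]].
  exists (Rabs M1 * Rabs M2), (Rabs M1 * L2 + Rabs M2 * L1). split.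
  { pose proof (Rabs_pos M1). pose proof (Rabs_pos M2). nra. } split.
  - intros v Hv. rewrite Rabs_mult. pose proof (HM1 v Hv). pose proof (HM2 v Hv).
    pose proof (Rle_abs M1). pose proof (Rle_abs M2).
    apply Rmult_le_compat; try apply Rabs_pos; lra.
  - intros v w e Hv Hw He. pose proof (e_nonneg _ _ _ He) as He0.
    replace (phi v * psi v - phi w * psi w) with (phi v * (psi v - psi w) + psi w * (phi v - phi w)) by ring.
    eapply Rle_trans. apply Rabs_triang. rewrite !Rabs_mult.
    pose proof (HM1 v Hv). pose proof (HM2 w Hw). pose proof (Rle_abs M1). pose proof (Rle_abs M2).
    pose proof (HLip1 v w e Hv Hw He). pose proof (HLip2 v w e Hv Hw He).
    assert (Rabs (phi v) * Rabs (psi v - psi w) <= Rabs M1 * (L2 * e)).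
    { apply Rmult_le_compat; try apply Rabs_pos; lra. }
    assert (Rabs (psi w) * Rabs (phi v - phi w) <= Rabs M2 * (L1 * e)).
    { apply Rmult_le_compat; try apply Rabs_pos; lra. }
    lra.
Qed.

Lemma LL_inv c rho phi m : 0 < m -> (forall v, inbox c rho v -> m <= phi v) ->
  LL c rho phi -> LL c rho (fun v => / phi v).
Proof.
  intros Hm Hlow [M1 [L1 [HL1 [HM1 HLip1]]]].
  exists (/ m), (L1 / (m * m)). split. apply Rmult_le_pos. lra. left. apply Rinv_0_lt_compat. nra. split.
  - intros v Hv. pose proof (Hlow v Hv). rewrite Rabs_right. apply Rinv_le_contravar; lra.
    left. apply Rinv_0_lt_compat. lra.
  - intros v w e Hv Hw He. pose proof (Hlow v Hv). pose proof (Hlow w Hw).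
    pose proof (HLip1 v w e Hv Hw He).
    replace (/ phi v - / phi w) with ((phi w - phi v) / (phi v * phi w)) by (field; lra).
    unfold Rdiv. rewrite Rabs_mult. rewrite Rabs_Rinv by nra. rewrite Rabs_mult.
    rewrite (Rabs_right (phi v)) by lra. rewrite (Rabs_right (phi w)) by lra.
    rewrite <- Rabs_Ropp. replace (- (phi w - phi v)) with (phi v - phi w) by ring.
    assert (/ (phi v * phi w) <= / (m * m)). { apply Rinv_le_contravar. nra. apply Rmult_le_compat; lra. }
    assert (0 <= / (phi v * phi w)). { left. apply Rinv_0_lt_compat. nra. }
    pose proof (Rabs_pos (phi v - phi w)).
    replace (L1 * / (m * m) * e) with ((L1 * e) * / (m * m)) by ring.
    apply Rmult_le_compat; auto.
Qed.

Lemma LL_sqrt c rho phi m : 0 < m -> (forall v, inbox c rho v -> m <= phi v) ->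
  LL c rho phi -> LL c rho (fun v => sqrt (phi v)).
Proof.
  intros Hm Hlow [M1 [L1 [HL1 [HM1 HLip1]]]].
  pose proof (sqrt_lt_R0 m Hm) as Hsm.
  exists (sqrt (Rabs M1)), (L1 / sqrt m). split. apply Rmult_le_pos. lra. left. apply Rinv_0_lt_compat. lra. split.
  - intros v Hv. pose proof (Hlow v Hv). pose proof (HM1 v Hv). rewrite Rabs_right by (apply Rle_ge, sqrt_pos).
    apply sqrt_le_1_alt. rewrite Rabs_right in H0 by lra. pose proof (Rle_abs M1). lra.
  - intros v w e Hv Hw He. pose proof (Hlow v Hv). pose proof (Hlow w Hw).
    pose proof (HLip1 v w e Hv Hw He).
    assert (Hsv : sqrt m <= sqrt (phi v)) by (apply sqrt_le_1_alt; lra).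
    assert (Hsw : sqrt m <= sqrt (phi w)) by (apply sqrt_le_1_alt; lra).
    assert (E : sqrt (phi v) - sqrt (phi w) = (phi v - phi w) / (sqrt (phi v) + sqrt (phi w))).
    { assert (E0 : (sqrt (phi v) - sqrt (phi w)) * (sqrt (phi v) + sqrt (phi w)) = phi v - phi w).
      { replace ((sqrt (phi v) - sqrt (phi w)) * (sqrt (phi v) + sqrt (phi w))) with
          (sqrt (phi v) * sqrt (phi v) - sqrt (phi w) * sqrt (phi w)) by ring.
        rewrite !sqrt_sqrt by lra. ring. }
      rewrite <- E0. field. lra. }
    rewrite E. unfold Rdiv. rewrite Rabs_mult. rewrite Rabs_Rinv by lra. rewrite (Rabs_right (_ + _)) by lra.
    assert (/ (sqrt (phi v) + sqrt (phi w)) <= / sqrt m). { apply Rinv_le_contravar; lra. }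
    assert (0 <= / (sqrt (phi v) + sqrt (phi w))). { left. apply Rinv_0_lt_compat. lra. }
    pose proof (Rabs_pos (phi v - phi w)).
    replace (L1 * / sqrt m * e) with ((L1 * e) * / sqrt m) by ring.
    apply Rmult_le_compat; auto.
Qed.

Lemma LL_pow c rho phi n : LL c rho phi -> LL c rho (fun v => phi v ^ n).
Proof.
  intros H. induction n as [|n IH]; simpl.
  - apply LL_const.
  - apply LL_mult; auto.
Qed.

Lemma LL_div c rho phi psi m : 0 < m -> (forall v, inbox c rho v -> m <= psi v) ->
  LL c rho phi -> LL c rho psi -> LL c rho (fun v => phi v / psi v).
Proof.
  intros Hm Hl H1 H2. unfold Rdiv. apply LL_mult; auto. apply (LL_inv c rho psi m); auto.
Qed.

Definition Gc (k : R) (v : nat -> R) (i : nat) : R :=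
 match i with
 | O => v 3%nat
 | S O => v 4%nat / (v 0%nat)^2
 | S (S O) => v 4%nat / 2
 | S (S (S O)) => (v 4%nat)^2 / (v 0%nat)^3 - 2*k*(v 0%nat)^3 / Dpow (v 0%nat) (v 2%nat)
 | S (S (S (S O))) => - (8*k*(v 0%nat)^2 * v 2%nat) / Dpow (v 0%nat) (v 2%nat)
 | _ => 0 end.

Definition clamp a b x := Rmax a (Rmin b x).
Definition Pc (c : nat -> R) rho (v : nat -> R) : nat -> R := fun j => clamp (c j - rho) (c j + rho) (v j).
Definition Gfull k c rho v := Gc k (Pc c rho v).

Lemma clamp_in a b x : a <= b -> a <= clamp a b x <= b.
Proof. intros H. unfold clamp. unfold Rmax, Rmin. repeat destruct Rle_dec; lra. Qed.

Lemma clamp_lip a b x y : a <= b -> Rabs (clamp a b x - clamp a b y) <= Rabs (x - y).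
Proof. intros H. unfold clamp, Rmax, Rmin. repeat destruct Rle_dec; apply Rabs_le; unfold Rabs; destruct Rcase_abs; lra. Qed.

Lemma clamp_id a b x : a <= x <= b -> clamp a b x = x.
Proof. intros H. unfold clamp, Rmax, Rmin. repeat destruct Rle_dec; lra. Qed.

Lemma Pc_inbox c rho v : 0 <= rho -> inbox c rho (Pc c rho v).
Proof.
  intros Hr j Hj. unfold Pc. pose proof (clamp_in (c j - rho) (c j + rho) (v j) ltac:(lra)).
  apply Rabs_le. lra.
Qed.

Lemma Pc_id c rho v : inbox c rho v -> forall j, (j<5)%nat -> Pc c rho v j = v j.
Proof.
  intros Hv j Hj. unfold Pc. apply clamp_id. pose proof (Hv j Hj) as X. apply Rabs_le_between in X. lra.
Qed.

Lemma inbox_r c v : 0 < c 0%nat -> inbox c (c 0%nat / 2) v -> c 0%nat / 2 <= v 0%nat.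
Proof. intros Hc Hv. pose proof (Hv 0%nat ltac:(lia)) as X. apply Rabs_le_between in X. lra. Qed.

Lemma LL_Gc k c : 0 < c 0%nat -> forall i, (i<5)%nat -> LL c (c 0%nat / 2) (fun v => Gc k v i).
Proof.
  intros Hc i Hi. set (rho := c 0%nat / 2).
  assert (Hr : forall v, inbox c rho v -> rho <= v 0%nat) by (intros; apply inbox_r; auto).
  assert (Hrho : 0 < rho) by (unfold rho; lra).
  assert (Hr2 : forall v, inbox c rho v -> rho^2 <= v 0%nat ^ 2).
  { intros v Hv. apply pow_incr. pose proof (Hr v Hv). lra. }
  assert (Hr3 : forall v, inbox c rho v -> rho^3 <= v 0%nat ^ 3).
  { intros v Hv. apply pow_incr. pose proof (Hr v Hv). lra. }
  assert (Hr4 : forall v, inbox c rho v -> rho^4 <= v 0%nat ^ 4 + 16 * v 2%nat ^ 2).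
  { intros v Hv. pose proof (pow_incr rho (v 0%nat) 4 ltac:(pose proof (Hr v Hv); lra)).
    assert (0 <= v 2%nat ^ 2) by (apply pow2_ge_0). lra. }
  assert (Hp4 : 0 < rho ^ 4) by (apply pow_lt; lra).
  assert (HX : LL c rho (fun v => v 0%nat ^ 4 + 16 * v 2%nat ^ 2)).
  { apply LL_plus. apply LL_pow, LL_coord; lia. apply LL_mult. apply LL_const. apply LL_pow, LL_coord; lia. }
  assert (HD : LL c rho (fun v => Dpow (v 0%nat) (v 2%nat))).
  { unfold Dpow. apply LL_mult. exact HX. apply (LL_sqrt _ _ _ (rho^4)); auto. }
  assert (HDl : forall v, inbox c rho v -> rho^4 * sqrt (rho^4) <= Dpow (v 0%nat) (v 2%nat)).
  { intros v Hv. unfold Dpow. pose proof (Hr4 v Hv). apply Rmult_le_compat; try lra.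
    apply sqrt_pos. apply sqrt_le_1_alt. lra. }
  assert (HDp : 0 < rho^4 * sqrt (rho^4)) by (apply Rmult_lt_0_compat; [lra | apply sqrt_lt_R0; lra]).
  assert (H2p : 0 < rho^2) by (apply pow_lt; lra).
  assert (H3p : 0 < rho^3) by (apply pow_lt; lra).
  destruct i as [|[|[|[|[|i]]]]]; simpl; try lia.
  - apply LL_coord; lia.
  - apply (LL_div c rho (fun v => v 4%nat) (fun v => v 0%nat ^ 2) (rho^2)); auto. apply LL_coord; lia. apply LL_pow, LL_coord; lia.
  - apply (LL_div c rho (fun v => v 4%nat) (fun _ => 2) 1); try (intros; lra). apply LL_coord; lia. apply LL_const.
  - apply LL_ext with (phi := fun v => (v 4%nat)^2 / (v 0%nat)^3 + - (2*k*(v 0%nat)^3 / Dpow (v 0%nat) (v 2%nat))).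
    { intros v. cbv beta. unfold Rminus. reflexivity. }
    apply LL_plus. apply (LL_div c rho (fun v => v 4%nat ^ 2) (fun v => v 0%nat ^ 3) (rho^3)); auto. apply LL_pow, LL_coord; lia. apply LL_pow, LL_coord; lia.
    apply LL_opp. apply (LL_div c rho (fun v => 2*k*(v 0%nat)^3) (fun v => Dpow (v 0%nat) (v 2%nat)) _ HDp); auto. apply LL_mult. apply LL_const. apply LL_pow, LL_coord; lia.
  - apply (LL_div c rho (fun v => - (8*k*(v 0%nat)^2 * v 2%nat)) (fun v => Dpow (v 0%nat) (v 2%nat)) _ HDp); auto. apply LL_opp. apply LL_mult. apply LL_mult. apply LL_const.
    apply LL_pow, LL_coord; lia. apply LL_coord; lia.
Qed.

Lemma LL_combine c rho (F : (nat -> R) -> nat -> R) :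
  (forall i, (i<5)%nat -> LL c rho (fun v => F v i)) ->
  forall N, (N <= 5)%nat -> exists M L, 0 < M /\ 0 < L /\ forall i, (i < N)%nat ->
    (forall v, inbox c rho v -> Rabs (F v i) <= M) /\
    (forall v w e, inbox c rho v -> inbox c rho w -> (forall j, (j<5)%nat -> Rabs (v j - w j) <= e) ->
       Rabs (F v i - F w i) <= L * e).
Proof.
  intros HF. induction N as [|N IH]; intros HN.
  - exists 1, 1. split. lra. split. lra. intros; lia.
  - destruct (IH ltac:(lia)) as [M [L [HM0 [HL0 Hb]]]].
    destruct (HF N ltac:(lia)) as [M1 [L1 [HL1 [HM1 HLip1]]]].
    exists (M + Rabs M1), (L + L1). split. pose proof (Rabs_pos M1). lra. split. lra.
    intros i Hi. destruct (Nat.eq_dec i N) as [->|Hne].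
    + split. intros v Hv. pose proof (HM1 v Hv). pose proof (Rle_abs M1). lra.
      intros v w e Hv Hw He. pose proof (e_nonneg _ _ _ He). pose proof (HLip1 v w e Hv Hw He). nra.
    + destruct (Hb i ltac:(lia)) as [Hb1 Hb2]. split.
      intros v Hv. pose proof (Hb1 v Hv). pose proof (Rabs_pos M1). lra.
      intros v w e Hv Hw He. pose proof (e_nonneg _ _ _ He). pose proof (Hb2 v w e Hv Hw He). nra.
Qed.

Lemma PH_Gfull k c : 0 < c 0%nat -> exists M L, PH (Gfull k c (c 0%nat / 2)) M L.
Proof.
  intros Hc.
  destruct (LL_combine c (c 0%nat / 2) (Gc k) (LL_Gc k c Hc) 5 (le_n 5)) as [M [L [HM0 [HL0 Hb]]]].
  exists M, L. split. exact HM0. split. exact HL0. split.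
  - intros v i Hi. apply (Hb i Hi). apply Pc_inbox. lra.
  - intros v w e He i Hi. unfold Gfull. apply (Hb i Hi). apply Pc_inbox; lra. apply Pc_inbox; lra.
    intros j Hj. eapply Rle_trans. unfold Pc. apply clamp_lip. lra. auto.
Qed.

Lemma Gfull_id k c rho v : inbox c rho v -> forall i, Gfull k c rho v i = Gc k v i.
Proof.
  intros Hv i. unfold Gfull.
  destruct i as [|[|[|[|[|i]]]]]; simpl; rewrite ?(Pc_id c rho v Hv) by lia; reflexivity.
Qed.

Lemma exists_solution k r0 th0 z0 pR0 pS0 : 0 < r0 ->
  exists d, 0 < d /\ exists r th z pR pS : R -> R, is_solution k (-d) d r th z pR pS /\
    r 0 = r0 /\ th 0 = th0 /\ z 0 = z0 /\ pR 0 = pR0 /\ pS 0 = pS0.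
Proof.
  intros Hr0.
  set (c := fun j : nat => match j with O => r0 | S O => th0 | S (S O) => z0 | S (S (S O)) => pR0 | _ => pS0 end).
  assert (Hc : 0 < c 0%nat) by (simpl; lra).
  destruct (PH_Gfull k c Hc) as [M [L HPH]].
  pose proof HPH as [HM0 [HL0 _]].
  destruct (picard _ c M L HPH) as [d1 [Hd1 HY]].
  set (Y := Yinf (Gfull k c (c 0%nat / 2)) c) in HY.
  set (rho := c 0%nat / 2) in HY.
  assert (Hrho : 0 < rho) by (unfold rho; lra).
  set (d := Rmin d1 (rho / M)).
  assert (Hd : 0 < d) by (apply Rmin_pos; auto; apply Rdiv_lt_0_compat; lra).
  assert (Hdl : d <= d1) by (unfold d; apply Rmin_l).
  assert (Hdr : d <= rho / M) by (unfold d; apply Rmin_r).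
  clearbody d.
  assert (Hin : forall t, Rabs t < d -> inbox c rho (Y t)).
  { intros t Ht j Hj.
    destruct (HY t ltac:(lra) j Hj) as [_ Hb].
    eapply Rle_trans. exact Hb. apply Rle_trans with (M * (rho / M)).
    apply Rmult_le_compat_l; lra. right. field. lra. }
  exists d. split. exact Hd.
  exists (fun s => Y s 0%nat), (fun s => Y s 1%nat), (fun s => Y s 2%nat), (fun s => Y s 3%nat), (fun s => Y s 4%nat).
  assert (H0 : forall i, (i<5)%nat -> Y 0 i = c i).
  { intros i Hi. destruct (HY 0 ltac:(rewrite Rabs_R0; lra) i Hi) as [_ Hb].
    rewrite Rabs_R0, Rmult_0_r in Hb. pose proof (Rabs_pos (Y 0 i - c i)).
    assert (HZ : Rabs (Y 0 i - c i) = 0) by lra. apply Rabs_eq_0 in HZ. lra. }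
  split.
  - split. lra. intros t Ht.
    assert (Ht' : Rabs t < d) by (apply Rabs_def1; lra).
    assert (Ht1 : Rabs t < d1) by lra.
    pose proof (Hin t Ht') as Hi.
    assert (HD : forall i, (i<5)%nat -> is_derive (fun s => Y s i) t (Gc k (Y t) i)).
    { intros i Hi5. rewrite <- (Gfull_id k c rho (Y t) Hi). apply (HY t Ht1 i Hi5). }
    split.
    { pose proof (inbox_r c (Y t) Hc Hi). lra. }
    split. apply (HD 0%nat); lia.
    split. apply (HD 1%nat); lia.
    split. apply (HD 2%nat); lia.
    split. apply (HD 3%nat); lia.
    apply (HD 4%nat); lia.
  - rewrite !H0 by lia. simpl. tauto.
Qed.

Lemma slice (K dK : R -> R -> R -> R) (a b c : R -> R) t0 :
 (exists d0, 0 < d0 /\ forall u v w, Rabs (u - a t0) < d0 -> Rabs (v - b t0) < d0 -> Rabs (w - c t0) < d0 ->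
     is_derive (fun s => K s v w) u (dK u v w)) ->
 (forall e, 0 < e -> exists d, 0 < d /\ forall u v w, Rabs (u - a t0) < d -> Rabs (v - b t0) < d ->
     Rabs (w - c t0) < d -> Rabs (dK u v w - dK (a t0) (b t0) (c t0)) < e) ->
 continuous a t0 -> continuous b t0 -> continuous c t0 ->
 forall eta, 0 < eta -> exists de, 0 < de /\ forall t, Rabs (t - t0) < de -> exists m,
   K (a t) (b t) (c t) - K (a t0) (b t) (c t) = m * (a t - a t0) /\
   Rabs (m - dK (a t0) (b t0) (c t0)) < eta.
Proof.
  intros [d0 [Hd0 Hder]] HdK Ha Hb Hc eta Heta.
  destruct (HdK eta Heta) as [d [Hd HdK']].
  set (d' := Rmin d0 d).
  assert (Hd' : 0 < d') by (apply Rmin_pos; lra).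
  pose proof (Rmin_l d0 d). pose proof (Rmin_r d0 d). fold d' in H, H0.
  destruct (cont_eps a t0 Ha d' Hd') as [da [Hda Ha']].
  destruct (cont_eps b t0 Hb d' Hd') as [db [Hdb Hb']].
  destruct (cont_eps c t0 Hc d' Hd') as [dc [Hdc Hc']].
  exists (Rmin da (Rmin db dc)). split. repeat apply Rmin_pos; lra.
  intros t Ht.
  pose proof (Rmin_l da (Rmin db dc)). pose proof (Rmin_r da (Rmin db dc)).
  pose proof (Rmin_l db dc). pose proof (Rmin_r db dc).
  assert (HA : Rabs (a t - a t0) < d') by (apply Ha'; lra).
  assert (HB : Rabs (b t - b t0) < d') by (apply Hb'; lra).
  assert (HC : Rabs (c t - c t0) < d') by (apply Hc'; lra).
  assert (Hseg : forall s, Rmin (a t0) (a t) <= s <= Rmax (a t0) (a t) -> Rabs (s - a t0) < d').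
  { intros s Hs. apply Rabs_lt_between in HA. apply Rabs_lt_between.
    unfold Rmin, Rmax in Hs. destruct Rle_dec in Hs; lra. }
  destruct (MVT_gen (fun s => K s (b t) (c t)) (a t0) (a t) (fun s => dK s (b t) (c t))) as [xi [Hxi Heq]].
  - intros s Hs. apply Hder; try lra. pose proof (Hseg s ltac:(lra)). lra.
  - intros s Hs. apply continuity_pt_filterlim. apply (derive_cont (fun s => K s (b t) (c t)) s (dK s (b t) (c t))).
    apply Hder; try lra. pose proof (Hseg s Hs). lra.
  - exists (dK xi (b t) (c t)). split. exact Heq.
    apply HdK'; try lra. pose proof (Hseg xi Hxi). lra.
Qed.

Lemma term_bound m D q x' eta : eta <= 1 -> Rabs (m - D) < eta -> Rabs (q - x') < eta ->
  Rabs (m*q - D*x') <= eta * (Rabs x' + 1 + Rabs D).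
Proof.
  intros He Hm Hq.
  replace (m*q - D*x') with ((m - D) * q + D * (q - x')) by ring.
  eapply Rle_trans. apply Rabs_triang. rewrite !Rabs_mult.
  assert (Rabs q <= Rabs x' + 1).
  { replace q with ((q - x') + x') by ring. eapply Rle_trans. apply Rabs_triang. lra. }
  assert (Rabs (m - D) * Rabs q <= eta * (Rabs x' + 1)).
  { apply Rmult_le_compat; try apply Rabs_pos; lra. }
  assert (Rabs D * Rabs (q - x') <= Rabs D * eta).
  { apply Rmult_le_compat_l. apply Rabs_pos. lra. }
  lra.
Qed.

Lemma Ck1_unpack f : Ck 1 f ->
  (forall r th z, 0 < r -> cont3_at f r th z) /\
  (forall r th z, 0 < r ->
         ex_derive (fun x => f x th z) r /\
         ex_derive (fun x => f r x z) th /\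
         ex_derive (fun x => f r th x) z) /\
  (forall r th z, 0 < r -> cont3_at (fun r th z => Derive (fun x => f x th z) r) r th z) /\
  (forall r th z, 0 < r -> cont3_at (fun r th z => Derive (fun x => f r x z) th) r th z) /\
  (forall r th z, 0 < r -> cont3_at (fun r th z => Derive (fun x => f r th x) z) r th z).
Proof. simpl. tauto. Qed.

Lemma chain3 f : Ck 1 f -> forall (x y w : R -> R) t0 x' y' w',
  is_derive x t0 x' -> is_derive y t0 y' -> is_derive w t0 w' -> 0 < x t0 ->
  is_derive (fun t => f (x t) (y t) (w t)) t0
    (Derive (fun u => f u (y t0) (w t0)) (x t0) * x' +
     Derive (fun u => f (x t0) u (w t0)) (y t0) * y' +
     Derive (fun u => f (x t0) (y t0) u) (w t0) * w').
Proof.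
  intros Hf x y w t0 x' y' w' Hx Hy Hw Hx0.
  destruct (Ck1_unpack f Hf) as [_ [Hex [Cr [Cth Cz]]]].
  assert (Hexr : forall r th z, 0 < r -> ex_derive (fun x => f x th z) r) by (intros r th z Hr; destruct (Hex r th z Hr) as [A [B C]]; assumption).
  assert (Hext : forall r th z, 0 < r -> ex_derive (fun x => f r x z) th) by (intros r th z Hr; destruct (Hex r th z Hr) as [A [B C]]; assumption).
  assert (Hexz : forall r th z, 0 < r -> ex_derive (fun x => f r th x) z) by (intros r th z Hr; destruct (Hex r th z Hr) as [A [B C]]; assumption).
  clear Hex.
  set (x0 := x t0). set (y0 := y t0). set (w0 := w t0).
  set (D1 := Derive (fun u => f u y0 w0) x0).
  set (D2 := Derive (fun u => f x0 u w0) y0).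
  set (D3 := Derive (fun u => f x0 y0 u) w0).
  pose proof (derive_cont _ _ _ Hx) as Hxc.
  pose proof (derive_cont _ _ _ Hy) as Hyc.
  pose proof (derive_cont _ _ _ Hw) as Hwc.
  assert (S1 := slice f (fun u v w => Derive (fun s => f s v w) u) x y w t0).
  assert (S2 := slice (fun s v w => f x0 s w) (fun u v w => Derive (fun s => f x0 s w) u) y y w t0).
  assert (S3 := slice (fun s v w => f x0 y0 s) (fun u v w => Derive (fun s => f x0 y0 s) u) w w w t0).
  simpl in S1, S2, S3.
  assert (T1 : forall eta, 0 < eta -> exists de, 0 < de /\ forall t, Rabs (t - t0) < de -> exists m,
     f (x t) (y t) (w t) - f x0 (y t) (w t) = m * (x t - x0) /\ Rabs (m - D1) < eta).
  { apply S1; [ | | exact Hxc | exact Hyc | exact Hwc].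
    - exists (x0/2). split. unfold x0; lra. intros u v ww Hu Hv Hww. apply Derive_correct.
      apply Hexr. apply Rabs_lt_between in Hu. fold x0 in Hu. lra.
    - intros e He. destruct (Cr x0 y0 w0 Hx0 e He) as [d [Hd Hd']].
      exists (Rmin d (x0/2)). split. apply Rmin_pos; unfold x0; lra.
      intros u v ww Hu Hv Hww. pose proof (Rmin_l d (x0/2)). pose proof (Rmin_r d (x0/2)). unfold x0, y0, w0 in *.
      apply Hd'; try lra. apply Rabs_lt_between in Hu. destruct Hu. lra. }
  assert (T2 : forall eta, 0 < eta -> exists de, 0 < de /\ forall t, Rabs (t - t0) < de -> exists m,
     f x0 (y t) (w t) - f x0 y0 (w t) = m * (y t - y0) /\ Rabs (m - D2) < eta).
  { apply S2; [ | | exact Hyc | exact Hyc | exact Hwc].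
    - exists 1. split. lra. intros u v ww Hu Hv Hww. apply Derive_correct. apply Hext. exact Hx0.
    - intros e He. destruct (Cth x0 y0 w0 Hx0 e He) as [d [Hd Hd']].
      exists d. split. exact Hd. intros u v ww Hu Hv Hww. unfold x0, y0, w0 in *. apply Hd'; auto. rewrite Rminus_diag, Rabs_R0. lra. }
  assert (T3 : forall eta, 0 < eta -> exists de, 0 < de /\ forall t, Rabs (t - t0) < de -> exists m,
     f x0 y0 (w t) - f x0 y0 w0 = m * (w t - w0) /\ Rabs (m - D3) < eta).
  { apply S3; [ | | exact Hwc | exact Hwc | exact Hwc].
    - exists 1. split. lra. intros u v ww Hu Hv Hww. apply Derive_correct. apply Hexz. exact Hx0.
    - intros e He. destruct (Cz x0 y0 w0 Hx0 e He) as [d [Hd Hd']].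
      exists d. split. exact Hd. intros u v ww Hu Hv Hww. unfold x0, y0, w0 in *. apply Hd'; auto. rewrite Rminus_diag, Rabs_R0. lra.
      rewrite Rminus_diag, Rabs_R0. lra. }
  apply is_derive_Reals. apply is_derive_Reals in Hx. apply is_derive_Reals in Hy. apply is_derive_Reals in Hw.
  intros eps Heps.
  set (Kc := (Rabs x' + 1 + Rabs D1) + (Rabs y' + 1 + Rabs D2) + (Rabs w' + 1 + Rabs D3)).
  assert (HK : 0 < Kc) by (unfold Kc; pose proof (Rabs_pos x'); pose proof (Rabs_pos y'); pose proof (Rabs_pos w');
     pose proof (Rabs_pos D1); pose proof (Rabs_pos D2); pose proof (Rabs_pos D3); lra).
  set (eta := Rmin 1 (eps / (2 * Kc))).
  assert (Heta : 0 < eta) by (apply Rmin_pos; [lra | apply Rdiv_lt_0_compat; lra]).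
  assert (Heta1 : eta <= 1) by apply Rmin_l.
  assert (Heta2 : eta * Kc < eps).
  { pose proof (Rmin_r 1 (eps / (2 * Kc))). fold eta in H.
    apply Rle_lt_trans with (eps / (2*Kc) * Kc). apply Rmult_le_compat_r; lra.
    replace (eps / (2 * Kc) * Kc) with (eps/2) by (field; lra). lra. }
  destruct (T1 eta Heta) as [d1 [Hd1 H1]].
  destruct (T2 eta Heta) as [d2 [Hd2 H2]].
  destruct (T3 eta Heta) as [d3 [Hd3 H3]].
  destruct (Hx eta Heta) as [dx Hdx].
  destruct (Hy eta Heta) as [dy Hdy].
  destruct (Hw eta Heta) as [dw Hdw].
  set (dd := Rmin (Rmin d1 (Rmin d2 d3)) (Rmin dx (Rmin dy dw))).
  assert (Hdd : 0 < dd).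
  { unfold dd. repeat apply Rmin_pos; try lra; apply cond_pos. }
  exists (mkposreal dd Hdd). intros h Hh0 Hh. simpl in Hh.
  assert (Hm : forall a b c, Rabs h < Rmin a (Rmin b c) -> Rabs h < a /\ Rabs h < b /\ Rabs h < c).
  { intros a b c Habc. pose proof (Rmin_l a (Rmin b c)). pose proof (Rmin_r a (Rmin b c)).
    pose proof (Rmin_l b c). pose proof (Rmin_r b c). lra. }
  unfold dd in Hh. pose proof (Rmin_l (Rmin d1 (Rmin d2 d3)) (Rmin dx (Rmin dy dw))).
  pose proof (Rmin_r (Rmin d1 (Rmin d2 d3)) (Rmin dx (Rmin dy dw))).
  destruct (Hm d1 d2 d3 ltac:(lra)) as [Hh1 [Hh2 Hh3]].
  destruct (Hm dx dy dw ltac:(lra)) as [Hhx [Hhy Hhw]].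
  replace (t0 + h - t0) with h in * by ring.
  assert (Ht : Rabs (t0 + h - t0) < d1) by (replace (t0 + h - t0) with h by ring; lra).
  destruct (H1 (t0 + h) Ht) as [m1 [E1 B1]].
  assert (Ht2 : Rabs (t0 + h - t0) < d2) by (replace (t0 + h - t0) with h by ring; lra).
  destruct (H2 (t0 + h) Ht2) as [m2 [E2 B2]].
  assert (Ht3 : Rabs (t0 + h - t0) < d3) by (replace (t0 + h - t0) with h by ring; lra).
  destruct (H3 (t0 + h) Ht3) as [m3 [E3 B3]].
  pose proof (Hdx h Hh0 Hhx) as Qx. pose proof (Hdy h Hh0 Hhy) as Qy. pose proof (Hdw h Hh0 Hhw) as Qw.
  fold x0 y0 w0 in Qx, Qy, Qw |- *.
  assert (E : (f (x (t0 + h)) (y (t0 + h)) (w (t0 + h)) - f x0 y0 w0) / h -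
      (D1 * x' + D2 * y' + D3 * w') =
      (m1 * ((x (t0 + h) - x0) / h) - D1 * x') + (m2 * ((y (t0 + h) - y0) / h) - D2 * y') +
      (m3 * ((w (t0 + h) - w0) / h) - D3 * w')).
  { replace (f (x (t0 + h)) (y (t0 + h)) (w (t0 + h)) - f x0 y0 w0) with
      ((f (x (t0 + h)) (y (t0 + h)) (w (t0 + h)) - f x0 (y (t0 + h)) (w (t0 + h))) +
       (f x0 (y (t0 + h)) (w (t0 + h)) - f x0 y0 (w (t0 + h))) + (f x0 y0 (w (t0 + h)) - f x0 y0 w0)) by ring.
    rewrite E1, E2, E3. field. exact Hh0. }
  rewrite E.
  pose proof (term_bound m1 D1 _ x' eta Heta1 B1 Qx).
  pose proof (term_bound m2 D2 _ y' eta Heta1 B2 Qy).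
  pose proof (term_bound m3 D3 _ w' eta Heta1 B3 Qw).
  eapply Rle_lt_trans. apply Rabs_triang. eapply Rle_lt_trans. apply Rplus_le_compat_r. apply Rabs_triang.
  unfold Kc in Heta2. lra.
Qed.

Lemma isd_mult (f g : R -> R) x df dg : is_derive f x df -> is_derive g x dg ->
  is_derive (fun t => f t * g t) x (df * g x + f x * dg).
Proof. intros H1 H2. apply (is_derive_mult f g x df dg H1 H2). intros; apply Rmult_comm. Qed.

Lemma isd_plus (f g : R -> R) x df dg : is_derive f x df -> is_derive g x dg ->
  is_derive (fun t => f t + g t) x (df + dg).
Proof. intros H1 H2. apply (is_derive_plus f g x df dg H1 H2). Qed.

Definition dR (f : R -> R -> R -> R) r th z := Derive (fun u => f u th z) r.
Definition dT (f : R -> R -> R -> R) r th z := Derive (fun u => f r u z) th.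
Definition dZ (f : R -> R -> R -> R) r th z := Derive (fun u => f r th u) z.

Definition PDE k (f g h : R -> R -> R -> R) r th z p s :=
  (dR f r th z * p + dT f r th z * (s / r^2) + dZ f r th z * (s/2)) * p +
  f r th z * (s^2 / r^3 - 2*k*r^3 / Dpow r z) +
  ((dR g r th z * p + dT g r th z * (s / r^2) + dZ g r th z * (s/2)) * s +
  g r th z * (- (8*k*r^2*z) / Dpow r z)) +
  (dR h r th z * p + dT h r th z * (s / r^2) + dZ h r th z * (s/2)).

Lemma pde_holds k (f g h : R -> R -> R -> R) :
  Ck 1 f -> Ck 1 g -> Ck 1 h ->
  first_integral k (fun r th z pR pS => f r th z * pR + g r th z * pS + h r th z) ->
  forall r0 th0 z0 p0 s0, 0 < r0 -> PDE k f g h r0 th0 z0 p0 s0 = 0.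
Proof.
  intros Hf Hg Hh HFI r0 th0 z0 p0 s0 Hr0.
  destruct (exists_solution k r0 th0 z0 p0 s0 Hr0) as [d [Hd [r [th [z [pR [pS [Hsol [E1 [E2 [E3 [E4 E5]]]]]]]]]]]].
  pose proof Hsol as [_ Hs].
  destruct (Hs 0 ltac:(lra)) as [Hrp [Dr [Dth [Dz [DpR DpS]]]]].
  set (Phi := fun t => f (r t) (th t) (z t) * pR t + g (r t) (th t) (z t) * pS t + h (r t) (th t) (z t)).
  assert (Hc : is_derive Phi 0 0).
  { apply is_derive_ext_loc with (f := fun _ => Phi 0).
    - exists (mkposreal d Hd). intros t Ht. apply ballR in Ht. simpl in Ht. try rewrite Rminus_0_r in Ht.
      apply Rabs_def2 in Ht. unfold Phi. assert (Ht2 : -d < t < d) by (unfold minus, plus, opp in Ht; simpl in Ht; lra). apply (HFI (-d) d r th z pR pS Hsol 0 t); lra.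
    - apply (is_derive_const (K:=R_AbsRing) (V:=R_NormedModule)). }
  pose proof (chain3 f Hf r th z 0 _ _ _ Dr Dth Dz Hrp) as Cf.
  pose proof (chain3 g Hg r th z 0 _ _ _ Dr Dth Dz Hrp) as Cg.
  pose proof (chain3 h Hh r th z 0 _ _ _ Dr Dth Dz Hrp) as Ch.
  pose proof (isd_plus _ _ 0 _ _ (isd_plus _ _ 0 _ _ (isd_mult _ _ 0 _ _ Cf DpR) (isd_mult _ _ 0 _ _ Cg DpS)) Ch) as Hd2.
  pose proof (is_derive_unique _ _ _ Hc) as U1.
  pose proof (is_derive_unique _ _ _ Hd2) as U2.
  pose proof (eq_trans (eq_sym U2) U1) as U3. clear U1 U2.
  rewrite E1, E2, E3, E4, E5 in U3.
  unfold PDE, dR, dT, dZ. rewrite <- U3. assert (E1x : forall a : R, a = 0 -> r a = r0) by (intros a ->; exact E1). repeat match goal with |- context [r ?a] => rewrite (E1x a) by reflexivity end. ring.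
Qed.

Lemma pde_expand k f g h r th z p s :
  PDE k f g h r th z p s =
  dR f r th z * p^2 + (dT f r th z / r^2 + dZ f r th z / 2 + dR g r th z) * p * s +
  (f r th z / r^3 + dT g r th z / r^2 + dZ g r th z / 2) * s^2 +
  dR h r th z * p + (dT h r th z / r^2 + dZ h r th z / 2) * s +
  (f r th z * (- (2*k*r^3) / Dpow r z) + g r th z * (- (8*k*r^2*z) / Dpow r z)).
Proof. unfold PDE, Rdiv. ring. Qed.

Lemma quad_zero A B C D1 D2 E0 :
  (forall p s, A * p^2 + B * p * s + C * s^2 + D1 * p + D2 * s + E0 = 0) ->
  A = 0 /\ B = 0 /\ C = 0 /\ D1 = 0 /\ D2 = 0 /\ E0 = 0.
Proof.
  intros H.
  pose proof (H 0 0). pose proof (H 1 0). pose proof (H (-1) 0). pose proof (H 0 1). pose proof (H 0 (-1)).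
  pose proof (H 1 1). simpl in *. lra.
Qed.

Lemma isd_val (f : R -> R) x l l' : is_derive f x l -> l = l' -> is_derive f x l'.
Proof. intros H ->. exact H. Qed.

Lemma const_pos (phi : R -> R) : (forall x, 0 < x -> is_derive phi x 0) -> forall a b, 0 < a -> 0 < b -> phi a = phi b.
Proof.
  intros H a b Ha Hb.
  destruct (MVT_gen phi a b (fun _ => 0)) as [c [Hc E]].
  - intros x Hx. apply H. unfold Rmin in Hx. destruct Rle_dec in Hx; lra.
  - intros x Hx. apply continuity_pt_filterlim. apply (derive_cont phi x 0). apply H.
    unfold Rmin in Hx. destruct Rle_dec in Hx; lra.
  - lra.
Qed.

Lemma const_all (phi : R -> R) : (forall x, is_derive phi x 0) -> forall a b, phi a = phi b.
Proof.
  intros H a b.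
  destruct (MVT_gen phi a b (fun _ => 0)) as [c [Hc E]].
  - intros x Hx. apply H.
  - intros x Hx. apply continuity_pt_filterlim. apply (derive_cont phi x 0). apply H.
  - lra.
Qed.

Lemma poly3 phi a b : (forall r, 0 < r -> phi - a * r^2 - b * r^4 = 0) -> phi = 0.
Proof.
  intros H. pose proof (H 1 ltac:(lra)). pose proof (H 2 ltac:(lra)). pose proof (H 3 ltac:(lra)).
  simpl in *. lra.
Qed.

Lemma Dpow_pos r z : 0 < r -> 0 < Dpow r z.
Proof.
  intros Hr. unfold Dpow. assert (0 < r^4 + 16 * z^2).
  { pose proof (pow_lt r 4 Hr). pose proof (pow2_ge_0 z). lra. }
  apply Rmult_lt_0_compat. auto. apply sqrt_lt_R0. auto.
Qed.

Lemma Ck1_ex f : Ck 1 f -> forall r th z, 0 < r ->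
  ex_derive (fun x => f x th z) r /\ ex_derive (fun x => f r x z) th /\ ex_derive (fun x => f r th x) z.
Proof. intros H. destruct (Ck1_unpack f H) as [_ [A _]]. exact A. Qed.

Lemma Ck1_cont f : Ck 1 f -> forall r th z, 0 < r -> cont3_at f r th z.
Proof. intros H. destruct (Ck1_unpack f H) as [A _]. exact A. Qed.

Theorem proposition3 (k : R) (hk : 0 < k) (f g h : R -> R -> R -> R) :
  smooth3 f -> smooth3 g -> smooth3 h ->
  first_integral k (fun r th z pR pS => f r th z * pR + g r th z * pS + h r th z) ->
  forall r1 th1 z1 pR1 pS1 r2 th2 z2 pR2 pS2 : R, 0 < r1 -> 0 < r2 ->
    f r1 th1 z1 * pR1 + g r1 th1 z1 * pS1 + h r1 th1 z1 =
    f r2 th2 z2 * pR2 + g r2 th2 z2 * pS2 + h r2 th2 z2.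
Proof.
  intros Sf Sg Sh HFI.
  pose proof (Sf 1%nat) as Hf. pose proof (Sg 1%nat) as Hg. pose proof (Sh 1%nat) as Hh.
  assert (HC : forall r th z, 0 < r ->
    dR f r th z = 0 /\ (dT f r th z / r^2 + dZ f r th z / 2 + dR g r th z) = 0 /\
    (f r th z / r^3 + dT g r th z / r^2 + dZ g r th z / 2) = 0 /\
    dR h r th z = 0 /\ (dT h r th z / r^2 + dZ h r th z / 2) = 0 /\
    (f r th z * (- (2*k*r^3) / Dpow r z) + g r th z * (- (8*k*r^2*z) / Dpow r z)) = 0).
  { intros r th z Hr. apply quad_zero. intros p s. rewrite <- pde_expand.
    apply (pde_holds k f g h Hf Hg Hh HFI). exact Hr. }
  assert (Fr : forall r th z, 0 < r -> f r th z = f 1 th z).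
  { intros r th z Hr. apply (const_pos (fun u => f u th z)); auto; try lra.
    intros x Hx. destruct (HC x th z Hx) as [A _]. unfold dR in A. rewrite <- A.
    apply Derive_correct. apply (Ck1_ex f Hf x th z Hx). }
  assert (Hr1 : forall r th z, 0 < r -> h r th z = h 1 th z).
  { intros r th z Hr. apply (const_pos (fun u => h u th z)); auto; try lra.
    intros x Hx. destruct (HC x th z Hx) as [_ [_ [_ [A _]]]]. unfold dR in A. rewrite <- A.
    apply Derive_correct. apply (Ck1_ex h Hh x th z Hx). }
  assert (HT : forall th z, dT h 1 th z = 0 /\ dZ h 1 th z = 0).
  { intros th z.
    assert (E : forall r, 0 < r -> dT h r th z = dT h 1 th z /\ dZ h r th z = dZ h 1 th z).
    { intros r Hr. unfold dT, dZ. split; apply Derive_ext; intros; apply Hr1; auto. }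
    destruct (HC 1 th z ltac:(lra)) as [_ [_ [_ [_ [A _]]]]].
    destruct (HC 2 th z ltac:(lra)) as [_ [_ [_ [_ [B _]]]]].
    destruct (E 2 ltac:(lra)) as [E1 E2]. rewrite E1, E2 in B. simpl in A, B. lra. }
  assert (Hconst : forall r th z, 0 < r -> h r th z = h 1 0 0).
  { intros r th z Hr. rewrite (Hr1 r th z Hr).
    transitivity (h 1 0 z).
    - apply (const_all (fun u => h 1 u z)). intros x. destruct (HT x z) as [A _]. unfold dT in A.
      pose proof (Derive_correct _ _ (proj1 (proj2 (Ck1_ex h Hh 1 x z ltac:(lra))))) as D. apply (isd_val _ _ _ _ D). exact A.
    - apply (const_all (fun u => h 1 0 u)). intros x. destruct (HT 0 x) as [_ A]. unfold dZ in A.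
      pose proof (Derive_correct _ _ (proj2 (proj2 (Ck1_ex h Hh 1 0 x ltac:(lra))))) as D. apply (isd_val _ _ _ _ D). exact A. }
  assert (Rel : forall r th z, 0 < r -> r * f r th z + 4 * z * g r th z = 0).
  { intros r th z Hr. destruct (HC r th z Hr) as [_ [_ [_ [_ [_ A]]]]].
    pose proof (Dpow_pos r z Hr) as HD.
    assert (E : f r th z * (- (2*k*r^3) / Dpow r z) + g r th z * (- (8*k*r^2*z) / Dpow r z) =
       (- 2 * k * r^2 / Dpow r z) * (r * f r th z + 4 * z * g r th z)) by (field; lra).
    rewrite E in A. apply Rmult_integral in A. destruct A as [A|A]; auto.
    exfalso. assert (0 < 2 * k * r^2 / Dpow r z). { apply Rdiv_lt_0_compat; auto. pose proof (pow_lt r 2 Hr). nra. }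
    lra. }
  assert (F0 : forall r th z, 0 < r -> f r th z = 0).
  { intros r th z Hr. destruct (Req_dec z 0) as [Hz|Hz].
    - pose proof (Rel r th z Hr). subst z. nra.
    - rewrite (Fr r th z Hr).
      destruct (Ck1_ex f Hf 1 th z ltac:(lra)) as [_ [[ft Hft] [fz Hfz]]].
      set (phi := f 1 th z).
      apply (poly3 phi (ft / (4*z)) ((fz * z - phi) / (8 * z^2))).
      intros r' Hr'.
      destruct (HC r' th z Hr') as [_ [_ [A _]]].
      assert (G1 : forall u, g r' u z = - (r' / (4*z)) * f 1 u z).
      { intros u. pose proof (Rel r' u z Hr'). rewrite (Fr r' u z Hr') in H. field_simplify_eq; auto. lra. }
      assert (DT : dT g r' th z = - (r' / (4*z)) * ft).
      { unfold dT. rewrite (Derive_ext _ _ _ G1). apply is_derive_unique. apply is_derive_scal. exact Hft. }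
      assert (DZ : dZ g r' th z = - (r' / 4) * ((fz * z - phi * 1) / z^2)).
      { unfold dZ. apply is_derive_unique.
        apply is_derive_ext_loc with (f := fun u => - (r'/4) * (f 1 th u / u)).
        - assert (Hp : 0 < Rabs z) by (apply Rabs_pos_lt; auto).
          exists (mkposreal _ Hp). intros y Hy.
          assert (Hy' : Rabs (y - z) < Rabs z) by (apply (proj1 (ballR _ _ _)); exact Hy).
          assert (Hy0 : y <> 0).
          { intros ->. rewrite Rminus_0_l, Rabs_Ropp in Hy'. lra. }
          pose proof (Rel r' th y Hr'). rewrite (Fr r' th y Hr') in H. assert (E : g r' th y = - (r'/4) * (f 1 th y / y)) by (field_simplify_eq; auto; lra). symmetry; exact E.
        - apply is_derive_scal. apply is_derive_div; auto.
          apply (is_derive_id (K:=R_AbsRing)). }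
      rewrite (Fr r' th z Hr') in A. fold phi in A. rewrite DT, DZ in A.
      assert (Hr0 : r' <> 0) by lra.
      replace (phi - ft / (4 * z) * r' ^ 2 - (fz * z - phi) / (8 * z ^ 2) * r' ^ 4) with
        (r'^3 * (phi / r' ^ 3 + - (r' / (4 * z)) * ft / r' ^ 2 + - (r' / 4) * ((fz * z - phi * 1) / z ^ 2) / 2))
        by (field; auto).
      rewrite A. ring. }
  assert (G0 : forall r th z, 0 < r -> g r th z = 0).
  { assert (Gnz : forall r th z, 0 < r -> z <> 0 -> g r th z = 0).
    { intros r th z Hr Hz. pose proof (Rel r th z Hr). rewrite (F0 r th z Hr) in H.
      assert (4 * z * g r th z = 0) by lra. apply Rmult_integral in H0. destruct H0; auto. lra. }
    intros r th z Hr. destruct (Req_dec z 0) as [Hz|Hz]; auto. subst z.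
    destruct (Req_dec (g r th 0) 0) as [E|E]; auto. exfalso.
    destruct (Ck1_cont g Hg r th 0 Hr (Rabs (g r th 0)) ltac:(apply Rabs_pos_lt; auto)) as [d [Hd Hd']].
    specialize (Hd' r th (d/2) Hr).
    assert (Hc : Rabs (g r th (d/2) - g r th 0) < Rabs (g r th 0)).
    { apply Hd'; [rewrite Rminus_diag, Rabs_R0; lra | rewrite Rminus_diag, Rabs_R0; lra | rewrite Rminus_0_r, Rabs_right; lra]. }
    rewrite (Gnz r th (d/2) Hr ltac:(lra)) in Hc. rewrite Rminus_0_l, Rabs_Ropp in Hc. lra. }
  intros r1 th1 z1 pR1 pS1 r2 th2 z2 pR2 pS2 H1 H2.
  rewrite (F0 r1 th1 z1 H1), (F0 r2 th2 z2 H2), (G0 r1 th1 z1 H1), (G0 r2 th2 z2 H2),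
    (Hconst r1 th1 z1 H1), (Hconst r2 th2 z2 H2). ring.
Qed.
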